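(* With the notation of the context, let $N\ge2$, $\eta>0$ be a constant, and $Q$ a probability distribution on $\{\alpha_1,\dots,\alpha_N\}$. (i) If $Q(\alpha_i)<Q^*(\alpha_i)+\eta/N^2$ for all $i$, then $L(Q)<H(p)+D(p\|q)+\eta/N$. (ii) If $Q(\alpha_i)<Q^*(\alpha_i)+\eta/(N\lg N)$ for all $i$, then $L(Q)<H(p)+D(p\|q)+\eta/\lg N$. (iii) If $Q(\alpha_i)<Q^*(\alpha_i)+\eta/N$ for all $i$, then $L(Q)<H(p)+D(p\|q)+\eta$.
   Context: Let $\mathcal S$ be a finite alphabet with $|\mathcal S|\ge2$, $p$ a probability distribution on $\mathcal S$ with $p(s)>0$, $N_s$ ($s\in\mathcal S$) positive integers, $N=\sum_sN_s$, $q(s)=N_s/N$, $\lg=\log_2$, and $\kappa_s=\lceil\lg(N/N_s)\rceil$ (so $\kappa_s\ge1$ and $N\le 2^{\kappa_s}N_s<2N$). Let $\alpha_1,\dots,\alpha_N$ be the states. For a probability distribution $Q$ on $\{\alpha_1,\dots,\alpha_N\}$ define $L(Q)=\sum_s p(s)\sum_{i=1}^N Q(\alpha_i)\ell_s(i)$, where $\ell_s(i)=\kappa_s-1$ if $i\le 2^{\kappa_s}N_s-N$ and $\ell_s(i)=\kappa_s$ otherwise. (This is the average code length of the Yokoo–Dubé-type sAEDS, whose state $\alpha_i$ encodes $s$ with $\ell_s(i)$ bits, when $Q$ is its stationary distribution with states indexed in non-increasing order of $Q$.) $Q^*(\alpha_i)=\lg\frac{N+i}{N+i-1}$, which sums to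 1. $H(p)=-\sum p\lg p$, $D(p\|q)=\sum p\lg(p/q)$. *)

(* Defs.v *)
From HB Require Import structures.
From mathcomp Require Import all_boot all_order all_algebra.
From mathcomp Require Import reals exp.
Set Implicit Arguments. Unset Strict Implicit. Unset Printing Implicit Defensive.
Import Order.TTheory GRing.Theory Num.Theory.
Local Open Scope ring_scope.

Section Defs.
Variable R : realType.
Variable S : finType.

Definition lg (x : R) : R := ln x / ln 2.

Definition Ntot (Ns : S -> nat) : nat := (\sum_(s : S) Ns s)%N.

Definition qdist (Ns : S -> nat) (s : S) : R := (Ns s)%:R / (Ntot Ns)%:R.

Definition kappa (Ns : S -> nat) (s : S) : int :=
  Num.ceil (lg ((Ntot Ns)%:R / (Ns s)%:R)).

(* ell_s(i), states alpha_1..alpha_N, index i : 'I_N stands for alpha_(i+1) *)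
Definition ell (Ns : S -> nat) (s : S) (i : nat) : R :=
  let k := kappa Ns s in
  if ((i.+1)%:R <= (2 : R) ^ k * (Ns s)%:R - (Ntot Ns)%:R)
  then k%:~R - 1 else k%:~R.

Definition Lcode (p : S -> R) (Ns : S -> nat) (Q : 'I_(Ntot Ns) -> R) : R :=
  \sum_(s : S) p s * \sum_(i < Ntot Ns) Q i * ell Ns s i.

Definition Qstar (N : nat) (i : nat) : R :=
  lg ((N + i.+1)%:R / (N + i)%:R).

Definition entropy (p : S -> R) : R := - \sum_(s : S) p s * lg (p s).
Definition divergence (p q : S -> R) : R := \sum_(s : S) p s * lg (p s / q s).

End Defs.

(* Main.v *)
Require Import Defs.
From HB Require Import structures.
From mathcomp Require Import all_boot all_order all_algebra.
From mathcomp Require Import reals exp.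
From mathcomp Require Import ring lra zify.
Import Order.TTheory GRing.Theory Num.Theory.
Local Open Scope ring_scope.

Section Aux.
Variable R : realType.

Lemma ln2_gt0 : 0 < ln (2 : R).
Proof. by apply: ln_gt0; rewrite ltr1n. Qed.

Lemma lg2 : lg (2 : R) = 1.
Proof. by rewrite /lg divff // gt_eqF // ln2_gt0. Qed.

Lemma lgM (x y : R) : 0 < x -> 0 < y -> lg (x * y) = lg x + lg y.
Proof. by move=> hx hy; rewrite /lg lnM ?posrE // mulrDl. Qed.

Lemma lgD (x y : R) : 0 < x -> 0 < y -> lg (x / y) = lg x - lg y.
Proof. by move=> hx hy; rewrite /lg ln_div ?posrE // mulrBl. Qed.

Lemma lgXn (n : nat) : lg ((2 : R) ^+ n) = n%:R.
Proof. by rewrite /lg lnXn // mulrnAl divff // gt_eqF // ln2_gt0. Qed.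

Lemma lg_lt (x y : R) : 0 < x -> 0 < y -> (lg x < lg y) = (x < y).
Proof. by move=> hx hy; rewrite /lg ltr_pM2r ?invr_gt0 ?ln2_gt0 // ltr_ln ?posrE. Qed.

Lemma lg_le (x y : R) : 0 < x -> 0 < y -> (lg x <= lg y) = (x <= y).
Proof. by move=> hx hy; rewrite /lg ler_pM2r ?invr_gt0 ?ln2_gt0 // ler_ln ?posrE. Qed.

Lemma sum_ord_ge (N m : nat) (f : nat -> R) : (m <= N)%N ->
  \sum_(i < N | ~~ (i < m)%N) f i = \sum_(m <= i < N) f i.
Proof.
move=> hm; rewrite -(big_mkord (fun i => ~~ (i < m)%N) f).
rewrite (@big_cat_nat _ _ _ m) // /= big_nat_cond big1 ?add0r.
  rewrite big_nat_cond [RHS]big_nat_cond; apply: eq_bigl => i.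
  by case: (m <= i)%N (leqNgt m i) => <- //=; rewrite andbT.
by move=> i /andP[/andP[_ ->]].
Qed.


Lemma key (S : finType) (Ns : S -> nat) (s : S) (Q : 'I_(Ntot Ns) -> R) (eps : R) :
  (0 < Ns s)%N -> (2 <= Ntot Ns)%N -> 0 <= eps -> \sum_(i < Ntot Ns) Q i = 1 ->
  (forall i : 'I_(Ntot Ns), Q i < Qstar R (Ntot Ns) i + eps) ->
  \sum_(i < Ntot Ns) Q i * ell R Ns s i <
    lg (Ntot Ns)%:R - lg (Ns s)%:R + (Ntot Ns)%:R * eps.
Proof.
move=> a0 N2 e0 Q1 hQ.
have aN : (Ns s <= Ntot Ns)%N by rewrite /Ntot (bigD1 s) //= leq_addr.
rewrite /ell.
set N := Ntot Ns in aN N2 Q Q1 hQ *.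
set a := Ns s in a0 aN *.
have N0 : (0:R) < N%:R by rewrite ltr0n; apply: leq_trans N2.
have a0' : (0:R) < a%:R by rewrite ltr0n.
have lgq : lg (N%:R / a%:R) = lg N%:R - lg a%:R :> R by rewrite lgD.
have hk1 := ceil_ge (lg (N%:R / a%:R) : R).
have hk2 := ceilB1_lt (lg (N%:R / a%:R) : R).
have hk0 : (0 <= kappa R Ns s).
  rewrite /kappa ceil_ge0 lgq.
  have : lg (a%:R) <= lg (N%:R) :> R by rewrite lg_le // ler_nat.
  have : 0 <= lg (a%:R) :> R by rewrite -[X in X <= _](mul0r (ln 2)^-1) -ln1 -/(lg 1) lg_le // ler1n.
  lra.
have [n kn] : exists n : nat, kappa R Ns s = n%:Z by exists `|kappa R Ns s|%N; rewrite gez0_abs.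
rewrite kn -exprnP.
rewrite /kappa in kn; rewrite kn lgq in hk1 hk2.
have hlo : (N <= 2 ^ n * a)%N.
  rewrite -(ler_nat R) natrM natrX -(lg_le) ?mulr_gt0 ?exprn_gt0 // lgM ?exprn_gt0 // lgXn.
  move: hk1; rewrite /=. lra.
have hhi : (2 ^ n * a < 2 * N)%N.
  rewrite -(ltr_nat R) !natrM natrX -(lg_lt) ?mulr_gt0 ?exprn_gt0 // !lgM ?exprn_gt0 // lgXn lg2.
  move: hk2; rewrite intrD /=. lra.
set m := (2 ^ n * a - N)%N.
have hmR : (2:R) ^+ n * a%:R - N%:R = m%:R by rewrite natrB // natrM natrX.
have hmN : (m < N)%N by rewrite /m; lia.
rewrite hmR.
have E : forall i : 'I_N, Q i * (if (i.+1)%:R <= m%:R :> R then (Posz n)%:~R - 1 else (Posz n)%:~R)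
   = Q i * n%:R - (if (i < m)%N then Q i else 0).
  by move=> i; rewrite ler_nat; case: ifP => _; rewrite ?subr0 // mulrBr mulr1.
rewrite (eq_bigr _ (fun i _ => E i)) sumrB -mulr_suml Q1 mul1r -big_mkcond /=.
have Q1' := Q1; rewrite (bigID (fun i : 'I_N => (i < m)%N)) /= in Q1'.
have hlt : \sum_(i < N | ~~ (i < m)%N) Q i < \sum_(i < N | ~~ (i < m)%N) (Qstar R N i + eps).
  apply: ltr_sum => [|i _]; last exact: hQ.
  have hN1 : (N.-1 < N)%N by rewrite ltn_predL (leq_trans _ N2).
  apply/hasP; exists (Ordinal hN1); first by rewrite mem_index_enum.
  by rewrite /= -leqNgt -ltnS prednK // (leq_trans _ N2).
rewrite big_split /= in hlt.
have hst : \sum_(i < N | ~~ (i < m)%N) Qstar R N i = lg (N + N)%:R - lg (N + m)%:R :> R.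
  rewrite (@sum_ord_ge N m (Qstar R N)); last exact: ltnW.
  apply: (@telescope_sumr_eq _ m N (fun k => lg (R:=R) (N + k)%:R)); first exact: ltnW.
  move=> k _; rewrite /Qstar lgD // ltr0n addn_gt0 (leq_trans _ N2) //.
have heps : \sum_(i < N | ~~ (i < m)%N) eps <= N%:R * eps.
  have -> : N%:R * eps = \sum_(i < N) eps by rewrite sumr_const card_ord mulr_natl.
  by rewrite big_mkcond /=; apply: ler_sum => i _; case: ifP.
have hNN : lg (N + N)%:R = 1 + lg N%:R :> R.
  by rewrite addnn -mul2n natrM lgM ?lg2 // ltr0n.
have hNm : lg (N + m)%:R = n%:R + lg a%:R :> R by rewrite /m subnKC // natrM natrX lgM ?exprn_gt0 ?lgXn.
rewrite hst hNN hNm in hlt.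
move: hlt heps Q1'.
set A := \sum_(i < N | (i < m)%N) Q i.
set B := \sum_(i < N | ~~ (i < m)%N) Q i.
set Ee := \sum_(i < N | ~~ (i < m)%N) eps.
lra.
Qed.

Lemma main_eps (S : finType) (p : S -> R) (Ns : S -> nat) (eps : R) (Q : 'I_(Ntot Ns) -> R) :
  (2 <= #|S|)%N ->
  (forall s, 0 < p s) -> \sum_(s : S) p s = 1 ->
  (forall s, (0 < Ns s)%N) ->
  (2 <= Ntot Ns)%N -> 0 <= eps -> \sum_(i < Ntot Ns) Q i = 1 ->
  (forall i : 'I_(Ntot Ns), Q i < Qstar R (Ntot Ns) i + eps) ->
  Lcode p Q < entropy p + divergence p (qdist R Ns) + (Ntot Ns)%:R * eps.
Proof.
move=> S2 p0 p1 Ns0 N2 e0 Q1 hQ.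
have N0 : (0:R) < (Ntot Ns)%:R by rewrite ltr0n; apply: leq_trans N2.
have HDe : entropy p + divergence p (qdist R Ns) =
    \sum_s p s * (lg (Ntot Ns)%:R - lg (Ns s)%:R).
  have E : forall s, - (p s * lg (p s)) + p s * lg (p s / qdist R Ns s) =
      p s * (lg (Ntot Ns)%:R - lg (Ns s)%:R).
    move=> s; have a0 : (0:R) < (Ns s)%:R by rewrite ltr0n.
    rewrite /qdist lgD ?divr_gt0 // lgD //; ring.
  rewrite /entropy /divergence -sumrN -big_split; apply: eq_bigr => s _; exact: E.
rewrite HDe /Lcode.
have [x _] : exists x : S, x \in S by apply/card_gt0P; apply: leq_trans S2.
apply: (lt_le_trans (y := \sum_s p s * (lg (Ntot Ns)%:R - lg (Ns s)%:R + (Ntot Ns)%:R * eps))).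
  apply: ltr_sum => [|s _].
    by apply/hasP; exists x; rewrite ?mem_index_enum.
  by rewrite ltr_pM2l // key.
rewrite le_eqVlt; apply/orP; left; apply/eqP.
under eq_bigr do rewrite mulrDr.
by rewrite big_split /= -mulr_suml p1 mul1r.
Qed.

End Aux.

Theorem lemma2 (R : realType) (S : finType) (p : S -> R) (Ns : S -> nat)
  (eta : R) (Q : 'I_(Ntot Ns) -> R) :
  (2 <= #|S|)%N ->
  (forall s, 0 < p s) -> \sum_(s : S) p s = 1 ->
  (forall s, (0 < Ns s)%N) ->
  (2 <= Ntot Ns)%N ->
  0 < eta ->
  (forall i, 0 <= Q i) -> \sum_(i < Ntot Ns) Q i = 1 ->
  let N := Ntot Ns in
  let HD := entropy p + divergence p (qdist R Ns) in
  [/\ (forall i : 'I_N, Q i < Qstar R N i + eta / (N%:R ^+ 2)) ->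
        Lcode p Q < HD + eta / N%:R,
      (forall i : 'I_N, Q i < Qstar R N i + eta / (N%:R * lg N%:R)) ->
        Lcode p Q < HD + eta / lg N%:R
    & (forall i : 'I_N, Q i < Qstar R N i + eta / N%:R) ->
        Lcode p Q < HD + eta].
Proof.
move=> S2 p0 p1 Ns0 N2 eta0 Qge0 Q1 N HD.
have N0 : (0:R) < N%:R by rewrite ltr0n; apply: leq_trans N2.
have lgN : (0:R) < lg N%:R.
  by rewrite -[X in X < _](mul0r (ln (2:R))^-1) -ln1 -/(lg 1) lg_lt // ltr1n.
split => h.
- have := @main_eps R S p Ns _ Q S2 p0 p1 Ns0 N2 _ Q1 h.
  have -> : N%:R * (eta / N%:R ^+ 2) = eta / N%:R :> R.
    by field; rewrite gt_eqF.
  apply; apply: divr_ge0; [exact: ltW | exact: exprn_ge0 (ltW N0)].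
- have := @main_eps R S p Ns _ Q S2 p0 p1 Ns0 N2 _ Q1 h.
  have -> : N%:R * (eta / (N%:R * lg N%:R)) = eta / lg N%:R :> R.
    by field; rewrite !gt_eqF.
  apply; apply: divr_ge0; [exact: ltW | exact: ltW (mulr_gt0 N0 lgN)].
- have := @main_eps R S p Ns _ Q S2 p0 p1 Ns0 N2 _ Q1 h.
  have -> : N%:R * (eta / N%:R) = eta :> R.
    by field; rewrite gt_eqF.
  apply; apply: divr_ge0; [exact: ltW | exact: ltW N0].
Qed.
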